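(* Let $G$ be a countable amenable group and $\{W_n\}$ an increasing sequence of finite subsets of $G$ with $1_G\in W_n$ such that (1) $\{W_n\}$ is a Følner sequence, and (2) for some constant $C$, each $W_n$ is individually $C$-filling. Then there exists a subsequence $\{W_{n(i)}\}$ which is filling.
   Context: Følner: $|W_n\triangle gW_n|/|W_n|\to0$ for every $g\in G$. A sequence $\{V_{n(i)}f_i\}_{i=1}^I$ of right translates of members of a sequence $\{V_n\}$ is incremental if $n(1)\ge\dots\ge n(I)$ and $f_i\notin\bigcup_{j<i}V_{n(j)}f_j$. A sequence $\{V_n\}$ with $1_G\in V_n$ is filling if for some $c>0$ every incremental sequence satisfies $|\bigcup V_{n(i)}f_i|\ge c\sum|V_{n(i)}f_i|$. A finite set $W\ni 1_G$ is individually $C$-filling if for every sequence $\{Wf_i\}$ with $f_i\notin\bigcup_{j<i}Wf_j$ one has $|\bigcup Wf_i|\ge C\sum|Wf_i|$. *)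

(* Defs.v *)
From Stdlib Require Import Reals.
From HB Require Import structures.
From mathcomp Require Import all_boot monoid.
From mathcomp Require Import finmap.

Set Implicit Arguments.
Unset Strict Implicit.
Unset Printing Implicit Defensive.

Local Open Scope fset_scope.
Local Open Scope group_scope.

Section Filling.
Variable G : groupType.

Definition countable_group : Prop := exists f : G -> nat, injective f.

Definition rtrans (V : {fset G}) (f : G) : {fset G} := [fset v * f | v in V].
Definition ltrans (g : G) (W : {fset G}) : {fset G} := [fset g * w | w in W].

Definition symdiff (A B : {fset G}) : {fset G} := (A `\` B) `|` (B `\` A).

Definition Folner (W : nat -> {fset G}) : Prop :=
  forall g : G,
    Un_cv (fun n => Rdiv (INR #|` symdiff (W n) (ltrans g (W n))|) (INR #|` W n|)) (INR 0).

Definition amenable : Prop :=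
  exists W : nat -> {fset G}, (forall n, W n != fset0) /\ Folner W.

Definition translates_union (V : nat -> {fset G}) (s : seq (nat * G)) : {fset G} :=
  \bigcup_(p <- s) rtrans (V p.1) p.2.

Definition translates_sum (V : nat -> {fset G}) (s : seq (nat * G)) : nat :=
  \sum_(p <- s) #|` rtrans (V p.1) p.2|.

Definition fresh_points (V : nat -> {fset G}) (s : seq (nat * G)) : Prop :=
  forall i, (i < size s)%N ->
    (nth (0%N, 1) s i).2 \notin translates_union V (take i s).

Definition incremental (V : nat -> {fset G}) (s : seq (nat * G)) : Prop :=
  sorted geq (map fst s) /\ fresh_points V s.

Definition filling (V : nat -> {fset G}) : Prop :=
  (forall n, 1 \in V n) /\
  exists c : R, Rlt (INR 0) c /\
    forall s : seq (nat * G), incremental V s ->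
      Rle (Rmult c (INR (translates_sum V s))) (INR #|` translates_union V s|).

Definition indiv_filling (C : R) (W : {fset G}) : Prop :=
  1 \in W /\
  forall fs : seq G, fresh_points (fun _ => W) (map (fun f => (0%nat, f)) fs) ->
    Rle (Rmult C (INR (translates_sum (fun _ => W) (map (fun f => (0%nat, f)) fs))))
        (INR #|` translates_union (fun _ => W) (map (fun f => (0%nat, f)) fs)|).

End Filling.

(* Main.v *)
Require Import Defs.
From Stdlib Require Import Reals Lra IndefiniteDescription Lia.
From HB Require Import structures.
From mathcomp Require Import all_boot monoid.
From mathcomp Require Import finmap.
From mathcomp Require Import zify.

Set Implicit Arguments.
Unset Strict Implicit.
Unset Printing Implicit Defensive.

Local Open Scope fset_scope.
Local Open Scope group_scope.



Section Aux.
Variable G : groupType.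
Implicit Types (V : nat -> {fset G}) (s : seq (nat * G)) (B A : {fset G}).

Lemma card_rtrans A f : #|` rtrans A f| = #|` A|.
Proof. by rewrite /rtrans card_imfset //; apply: mulIg. Qed.

Lemma in_rtrans A f x : reflect (exists2 v, v \in A & x = v * f) (x \in rtrans A f).
Proof. exact: imfsetP. Qed.

Lemma mem_rtrans A f v : v \in A -> v * f \in rtrans A f.
Proof. by move=> vA; apply/in_rtrans; exists v. Qed.

Lemma U_nil V : translates_union V [::] = fset0.
Proof. by rewrite /translates_union big_nil. Qed.

Lemma U_cons V p s : translates_union V (p :: s) = rtrans (V p.1) p.2 `|` translates_union V s.
Proof. by rewrite /translates_union big_cons. Qed.

Lemma U_cat V s1 s2 : translates_union V (s1 ++ s2) = translates_union V s1 `|` translates_union V s2.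
Proof. by rewrite /translates_union big_cat. Qed.

Lemma in_U V s x : reflect (exists2 p, p \in s & x \in rtrans (V p.1) p.2) (x \in translates_union V s).
Proof.
apply: (iffP (bigfcupP _ _ _ _)) => [[p /andP[ps _] xp]|[p ps xp]]; exists p => //.
by rewrite ps.
Qed.

Lemma T_cat V s1 s2 : translates_sum V (s1 ++ s2) = (translates_sum V s1 + translates_sum V s2)%N.
Proof. by rewrite /translates_sum big_cat. Qed.

Lemma T_cons V p s : translates_sum V (p :: s) = (#|` rtrans (V p.1) p.2| + translates_sum V s)%N.
Proof. by rewrite /translates_sum big_cons. Qed.

Lemma card_fsetU_le A B : (#|` A `|` B| <= #|` A| + #|` B|)%N.
Proof. by rewrite -cardfsUI leq_addr. Qed.

Lemma card_bigcup_le (I : eqType) (r : seq I) (F : I -> {fset G}) :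
  (#|` \bigcup_(i <- r) F i| <= \sum_(i <- r) #|` F i|)%N.
Proof.
elim: r => [|i r IH]; first by rewrite !big_nil cardfs0.
rewrite !big_cons; apply: leq_trans (card_fsetU_le _ _) _.
by rewrite leq_add2l.
Qed.

Fixpoint fresh_from V B s : Prop :=
  match s with
  | [::] => True
  | p :: s' => p.2 \notin B /\ fresh_from V (B `|` rtrans (V p.1) p.2) s'
  end.

Lemma fresh_fromE V B s : fresh_from V B s <->
  (forall s1 p s2, s = s1 ++ p :: s2 -> p.2 \notin B `|` translates_union V s1).
Proof.
elim: s B => [|q s IH] B /=.
  by split=> // _ [|? ?] ? ?.
split.
  move=> [qB /IH H] [|r s1] p s2 /=.
    by case=> <- _; rewrite U_nil fsetU0.
  by case=> <- E; rewrite U_cons fsetUA; apply: H E.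
move=> H; split.
  by have := H [::] q s erefl; rewrite U_nil fsetU0.
apply/IH => s1 p s2 E.
by have := H (q :: s1) p s2; rewrite E U_cons fsetUA; apply.
Qed.

Lemma fresh_points_from V s : fresh_points V s <-> fresh_from V fset0 s.
Proof.
rewrite fresh_fromE; split.
  move=> H s1 p s2 E; rewrite fset0U.
  have Hi : (size s1 < size s)%N by rewrite E size_cat /= addnS ltnS leq_addr.
  have := H _ Hi.
  by rewrite E nth_cat ltnn subnn /= take_size_cat.
move=> H i Hi.
have E := cat_take_drop i s.
rewrite (drop_nth (0%N, 1) Hi) in E.
by have := H _ _ _ (esym E); rewrite fset0U.
Qed.

Lemma fresh_cat V B s1 s2 : fresh_from V B (s1 ++ s2) <->
  fresh_from V B s1 /\ fresh_from V (B `|` translates_union V s1) s2.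
Proof.
elim: s1 B => [|p s1 IH] B /=.
  by rewrite U_nil fsetU0; split=> [H|[]].
rewrite IH U_cons fsetUA; tauto.
Qed.

Lemma fresh_filter V B B' s (P : pred (nat * G)) :
  fresh_from V B s -> B' `<=` B -> fresh_from V B' (filter P s).
Proof.
elim: s B B' => [|p s IH] B B' //= [pB Hs] sub.
case: (P p) => /=.
  split; first by apply: contra pB; apply/fsubsetP.
  by apply: IH Hs _; apply: fsetSU.
apply: IH Hs _; exact: fsubset_trans sub (fsubsetUl _ _).
Qed.

Lemma fresh_notin V B s : fresh_from V B s -> forall p, p \in s -> p.2 \notin B.
Proof.
elim: s B => [|q s IH] B //= [qB Hs] p.
rewrite in_cons => /orP[/eqP -> //|ps].
have := IH _ Hs p ps; apply: contra; apply/fsubsetP; exact: fsubsetUl.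
Qed.

Lemma fresh_uniq V B s : (forall k, 1 \in V k) -> fresh_from V B s -> uniq (map snd s).
Proof.
move=> H1; elim: s B => [|q s IH] B //= [qB Hs].
rewrite (IH _ Hs) andbT; apply/mapP => -[p ps E].
have := fresh_notin Hs ps; rewrite -E in_fsetU.
have -> : q.2 \in rtrans (V q.1) q.2.
  apply/in_rtrans. exists 1%g; [exact: H1| by rewrite mul1g].
by rewrite orbT.
Qed.

Lemma fresh_mapk V B s k : (forall p, p \in s -> p.1 = k) -> fresh_from V B s ->
  fresh_from (fun _ => V k) B (map (fun f => (0%N, f)) (map snd s)).
Proof.
elim: s B => [|q s IH] B //= Hk [qB Hs]; split; first exact: qB.
rewrite (Hk q (mem_head _ _)) in Hs; apply: IH Hs => p ps; by apply: Hk; rewrite in_cons ps orbT.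
Qed.

Lemma U_mapk V s k : (forall p, p \in s -> p.1 = k) ->
  translates_union (fun _ => V k) (map (fun f => (0%N, f)) (map snd s)) = translates_union V s.
Proof.
elim: s => [|q s IH] Hk /=; first by rewrite !U_nil.
rewrite !U_cons /= IH; first by rewrite (Hk q (mem_head _ _)).
by move=> p ps; by apply: Hk; rewrite in_cons ps orbT.
Qed.

Lemma T_mapk V s k : (forall p, p \in s -> p.1 = k) ->
  translates_sum (fun _ => V k) (map (fun f => (0%N, f)) (map snd s)) = translates_sum V s.
Proof.
elim: s => [|q s IH] Hk /=; first by rewrite /translates_sum !big_nil.
rewrite !T_cons /= IH; first by rewrite (Hk q (mem_head _ _)).
by move=> p ps; by apply: Hk; rewrite in_cons ps orbT.
Qed.

End Aux.



Lemma geq_trans' : transitive geq.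
Proof. by move=> y x z h1 h2; apply: leq_trans h2 h1. Qed.

Section Main.
Variable G : groupType.
Implicit Types (V : nat -> {fset G}) (s : seq (nat * G)) (B A : {fset G}).

Definition dd A (v : G) : nat := #|` symdiff A (ltrans v^-1 A)|.
Definition Dk V k s : nat := \sum_(p <- s) \sum_(v <- V k) dd (V p.1) v.
Definition Rk V k s : nat :=
  \sum_(p <- s) \sum_(k <= j < p.1) (#|` V j| * \sum_(v <- V j) dd (V p.1) v).

Lemma split_sorted s k : sorted geq (map fst s) -> (forall p, p \in s -> (k <= p.1)%N) ->
  s = filter (fun p => (k < p.1)%N) s ++ filter (fun p => p.1 == k) s.
Proof.
elim: s => [|x s IH] //= Hs Hk.
have Hts := path_sorted Hs.
have Hall := order_path_min geq_trans' Hs.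
have Hk' : forall p, p \in s -> (k <= p.1)%N by move=> p ps; apply: Hk; rewrite in_cons ps orbT.
have kx := Hk x (mem_head _ _).
case: ltnP => [xk|xk] /=.
  by rewrite (gtn_eqF xk) -IH.
have Ex : x.1 = k by apply/eqP; rewrite eqn_leq xk kx.
rewrite Ex eqxx.
have Hle : forall p, p \in s -> p.1 = k.
  move=> p ps; apply/eqP; rewrite eqn_leq Hk' // andbT -Ex.
  by have := allP Hall _ (map_f fst ps).
have -> : [seq p <- s | (k < p.1)%N] = [::].
  apply/eqP; rewrite -[_ == _]negbK -has_filter; apply/hasPn => p ps.
  by rewrite (Hle p ps) ltnn.
have -> // : [seq p <- s | p.1 == k] = s.
apply/all_filterP/allP => p ps; by rewrite (Hle p ps).
Qed.

Lemma T_filterID V s (P : pred (nat * G)) :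
  translates_sum V s = (translates_sum V (filter P s) + translates_sum V (filter (predC P) s))%N.
Proof. by rewrite /translates_sum !big_filter (bigID P). Qed.

Lemma sum_const_le s (c : nat) (F : nat * G -> nat) :
  (forall p, p \in s -> F p <= c)%N -> (\sum_(p <- s) F p <= size s * c)%N.
Proof.
elim: s => [|q s IH] H; first by rewrite big_nil.
rewrite big_cons /= mulSn leq_add //; first by apply: H; rewrite mem_head.
by apply: IH => p ps; apply: H; rewrite in_cons ps orbT.
Qed.

Variable V : nat -> {fset G}.
Variable C : R.
Hypothesis HC : Rlt (INR 0) C.
Hypothesis H1 : forall k, 1 \in V k.
Hypothesis Hind : forall k, indiv_filling C (V k).

Local Notation U := (translates_union V).
Local Notation T := (translates_sum V).

Lemma main_inv n : forall k s, sorted geq (map fst s) -> fresh_from V fset0 s ->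
  (forall p, p \in s -> (k <= p.1 < k + n)%N) ->
  Rle (Rmult C (INR (T s) - INR (Rk V k s))) (INR #|` U s|).
Proof.
elim: n => [|n IHn] k s Hs Hf Hk.
  case: s Hs Hf Hk => [|p s] _ _ Hk.
    rewrite /translates_sum /Rk /translates_union !big_nil cardfs0 /=; lra.
  by have := Hk p (mem_head _ _); rewrite addn0 => /andP[h1 h2]; move: (leq_ltn_trans h1 h2); rewrite ltnn.
set s1 := filter (fun p => (k < p.1)%N) s.
set L := filter (fun p => p.1 == k) s.
have E : s = s1 ++ L.
  apply: split_sorted => // p /Hk /andP[] //.
have Hs1 : sorted geq (map fst s1).
  exact: (subseq_sorted geq_trans' (map_subseq fst (filter_subseq _ s)) Hs).
move: (Hf); rewrite E fresh_cat => -[Hf1 HfL].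
rewrite fset0U in HfL.
have IH := IHn k.+1 s1 Hs1 Hf1.
have IH' : Rle (Rmult C (INR (T s1) - INR (Rk V k.+1 s1))) (INR #|` U s1|).
  apply: IH => p; rewrite mem_filter => /andP[kp /Hk /andP[_]].
  by rewrite kp addSnnS.
have Lk : forall p, p \in L -> p.1 = k by move=> p; rewrite mem_filter => /andP[/eqP].
set P := fun p : nat * G => fdisjoint (rtrans (V p.1) p.2) (U s1).
set Good := filter P L.
set Bad := filter (predC P) L.
have GL : forall p, p \in Good -> p \in L by move=> p; rewrite mem_filter => /andP[].
have BL : forall p, p \in Bad -> p \in L by move=> p; rewrite mem_filter => /andP[].
have HG : Rle (Rmult C (INR (T Good))) (INR #|` U Good|).
  have HfG : fresh_from V fset0 Good := fresh_filter P HfL (fsub0set _).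
  have := (Hind k).2 (map snd Good).
  rewrite (@T_mapk _ V Good k); last by move=> p /GL /Lk.
  rewrite (@U_mapk _ V Good k); last by move=> p /GL /Lk.
  apply; apply/fresh_points_from; apply: fresh_mapk => //.
  by move=> p /GL /Lk.
have HU : (#|` U s1| + #|` U Good| <= #|` U s|)%N.
  have -> : (#|` U s1| + #|` U Good| = #|` U s1 `|` U Good|)%N.
    rewrite -cardfsUI.
    suff -> : U s1 `&` U Good = fset0 by rewrite cardfs0 addn0.
    apply/fsetP => x; rewrite in_fsetI in_fset0.
    apply/negbTE/negP => /andP[x1 /in_U [p pG xp]].
    move: pG; rewrite mem_filter => /andP[/fdisjointP Hd _].
    by move: (Hd x xp); rewrite x1.
  rewrite E U_cat; apply: fsubset_leq_card; apply: fsetUS.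
  apply/fsubsetP => x /in_U [p pG xp]; apply/in_U; exists p => //; exact: GL.
have HTB : (T Bad <= size Bad * #|` V k|)%N.
  rewrite /translates_sum; apply: sum_const_le => p pB.
  by rewrite card_rtrans (Lk p (BL p pB)).
set Y := \bigcup_(p <- s1) \bigcup_(v <- V k) rtrans (ltrans v^-1 (V p.1) `\` V p.1) p.2.
have HY : (#|` Y| <= Dk V k s1)%N.
  apply: leq_trans (card_bigcup_le _ _) _.
  rewrite /Dk; apply: leq_sum => p _.
  apply: leq_trans (card_bigcup_le _ _) _.
  apply: leq_sum => v _.
  rewrite card_rtrans /dd /symdiff; apply: fsubset_leq_card; exact: fsubsetUr.
have HBsize : (size Bad <= Dk V k s1)%N.
  apply: leq_trans HY; rewrite -(size_map snd).
  apply: uniq_leq_size.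
    by apply: (fresh_uniq H1); apply: (fresh_filter _ HfL (fsub0set _)).
  move=> x /mapP [q qB ->].
  have qL := BL q qB.
  have qk := Lk q qL.
  have qnU : q.2 \notin U s1 by have := fresh_notin HfL qL.
  move: qB; rewrite mem_filter => /andP[/= /fset0Pn [y]]; rewrite in_fsetI => /andP[].
  move=> /in_rtrans [v vV ->] /in_U [p ps /in_rtrans [w wV Ew]] _.
  apply/bigfcupP; exists p; first by rewrite ps.
  apply/bigfcupP; exists v; first by rewrite andbT -qk.
  apply/in_rtrans; exists (v^-1 * w).
    rewrite in_fsetD; apply/andP; split.
      apply: contra qnU => Hin; apply/in_U; exists p => //; apply/in_rtrans.
      by exists (v^-1 * w) => //; rewrite -mulgA -Ew mulgA mulVg mul1g.
    by apply/imfsetP; exists w.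
  by rewrite -mulgA -Ew mulgA mulVg mul1g.
have HR : Rk V k s = (Rk V k.+1 s1 + #|` V k| * Dk V k s1)%N.
  rewrite /Rk E big_cat /=.
  rewrite [X in (_ + X)%N](big1_seq) ?addn0; last first.
    by move=> p /andP[_ /Lk ->]; rewrite big_geq.
  rewrite /Dk big_distrr -big_split /=.
  apply: eq_big_seq => p; rewrite mem_filter => /andP[kp _].
  by rewrite big_ltn // addnC.
have HT : T s = (T s1 + (T Good + T Bad))%N.
  by rewrite E T_cat (T_filterID _ L P).
rewrite -E HT HR !plus_INR mult_INR.
have HB' : Rle (INR (T Bad)) (Rmult (INR #|` V k|) (INR (Dk V k s1))).
  rewrite -mult_INR; apply: le_INR; apply/leP.
  by apply: leq_trans HTB _; rewrite mulnC leq_mul2l HBsize orbT.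
have HU' : Rle (INR #|` U s1| + INR #|` U Good|) (INR #|` U s|).
  by rewrite -plus_INR; apply: le_INR; apply/leP.
have HC' : Rle (Rmult C (INR (T Bad))) (Rmult C (Rmult (INR #|` V k|) (INR (Dk V k s1)))).
  apply: Rmult_le_compat_l => //; simpl in HC; lra.
lra.
Qed.

End Main.



Lemma sum_const_le' (I : eqType) (s : seq I) (c : nat) (F : I -> nat) :
  (forall p, p \in s -> F p <= c)%N -> (\sum_(p <- s) F p <= size s * c)%N.
Proof.
elim: s => [|q s IH] H; first by rewrite big_nil.
rewrite big_cons /= mulSn leq_add //; first by apply: H; rewrite mem_head.
by apply: IH => p ps; apply: H; rewrite in_cons ps orbT.
Qed.

Section RealAux.
Local Open Scope R_scope.
Lemma real_final (C t r u : R) : INR 0 < C -> C*(t - r) <= u -> INR 2 * r <= t -> Rdiv C (INR 2) * t <= u.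
Proof. simpl; move=> HC H1 H2. have : 0 <= C * (t - 2 * r) by apply: Rmult_le_pos; lra. nra. Qed.
Lemma real_half (C : R) : INR 0 < C -> INR 0 < Rdiv C (INR 2).
Proof. simpl; move=> HC; lra. Qed.
End RealAux.

Section Final.
Variable G : groupType.

Lemma Rk_bound (V : nat -> {fset G}) s :
  (forall j m, (j < m)%N -> (2 * m * (#|` V j| * \sum_(v <- V j) dd (V m) v) <= #|` V m|)%N) ->
  (2 * Rk V 0 s <= translates_sum V s)%N.
Proof.
move=> HF; rewrite /Rk /translates_sum big_distrr; apply: leq_sum => p _.
rewrite card_rtrans.
case E: p.1 => [|m]; first by rewrite big_geq.
rewrite -(@leq_pmul2l m.+1) // big_distrr /= big_distrr /=.
have -> : (m.+1 * #|` V m.+1| = \sum_(0 <= i < m.+1) #|` V m.+1|)%N by rewrite sum_nat_const_nat subn0.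
rewrite !big_mkord; apply: leq_sum => j _.
by rewrite mulnA (mulnC m.+1 2); apply: HF; exact: ltn_ord.
Qed.

Lemma bound_levels (s : seq (nat * G)) : exists K, forall p, p \in s -> (p.1 < K)%N.
Proof.
elim: s => [|q s [K HK]]; first by exists 0%N.
exists (maxn K q.1).+1 => p; rewrite in_cons => /orP[/eqP ->|ps].
  by rewrite ltnS leq_maxr.
by apply: leq_trans (HK p ps) _; apply: leq_trans (leq_maxl K q.1) (leqnSn _).
Qed.

Lemma filling_of (V : nat -> {fset G}) (C : R) :
  Rlt (INR 0) C -> (forall k, 1 \in V k) -> (forall k, indiv_filling C (V k)) ->
  (forall j m, (j < m)%N -> (2 * m * (#|` V j| * \sum_(v <- V j) dd (V m) v) <= #|` V m|)%N) ->
  filling V.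
Proof.
move=> HC H1 Hind HF; split => //.
exists (Rdiv C (INR 2)); split; first exact: real_half.
move=> s [Hs Hf]; move/fresh_points_from: Hf => Hf.
have [K HK] := bound_levels s.
have := main_inv HC H1 Hind (n:=K) (k:=0) Hs Hf.
have HR := Rk_bound s HF.
have HR' : Rle (Rmult (INR 2) (INR (Rk V 0 s))) (INR (translates_sum V s)).
  by rewrite -mult_INR; apply: le_INR; apply/leP.
move=> /(_ (fun p ps => HK p ps)) H.
exact: real_final HC H HR'.
Qed.

End Final.



Section RealAux2.
Local Open Scope R_scope.
Lemma real_conv (d M K1 : R) : 0 < M -> 0 < K1 -> Rdist (d / M) (INR 0) < / K1 -> d * K1 < M.
Proof.
rewrite /Rdist; simpl; move=> HM HK H.
have h : d / M < / K1 by apply: Rle_lt_trans (Rle_abs _) _; rewrite Rminus_0_r in H.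
have h2 := Rmult_lt_compat_r (M * K1) _ _ (Rmult_lt_0_compat _ _ HM HK) h.
have e1 : d / M * (M * K1) = d * K1 by field; lra.
have e2 : / K1 * (M * K1) = M by field; lra.
lra.
Qed.
End RealAux2.

Fixpoint mkphi (N : nat -> nat) (m : nat) : nat :=
  if m is m'.+1 then maxn (mkphi N m').+1 (N (mkphi N m')) else 0%N.

Lemma mkphi_lt N m : (mkphi N m < mkphi N m.+1)%N.
Proof. by rewrite /= leq_maxl. Qed.

Lemma mkphi_ge N m : (m <= mkphi N m)%N.
Proof. elim: m => //= m IH; apply: leq_trans (leq_maxl _ _); by rewrite ltnS. Qed.

Lemma mkphi_mono N j m : (j <= m)%N -> (mkphi N j <= mkphi N m)%N.
Proof.
elim: m => [|m IH]; first by rewrite leqn0 => /eqP ->.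
rewrite leq_eqVlt => /orP[/eqP -> //|]; rewrite ltnS => /IH h.
exact: leq_trans h (ltnW (mkphi_lt N m)).
Qed.

Section Constr.
Variable G : groupType.

Lemma finite_N (P : G -> nat -> Prop) (l : seq G) :
  (forall v, v \in l -> exists N, forall n, (N <= n)%N -> P v n) ->
  exists N, forall n, (N <= n)%N -> forall v, v \in l -> P v n.
Proof.
elim: l => [|x l IH] H; first by exists 0%N.
have [N1 HN1] := H x (mem_head _ _).
have [N2 HN2] : exists N, forall n, (N <= n)%N -> forall v, v \in l -> P v n.
  by apply: IH => v vl; apply: H; rewrite in_cons vl orbT.
exists (maxn N1 N2) => n; rewrite geq_max => /andP[h1 h2] v; rewrite in_cons => /orP[/eqP ->|vl].
  exact: HN1.
exact: HN2.
Qed.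

Variable W : nat -> {fset G}.
Hypothesis H1 : forall n, 1 \in W n.
Hypothesis HFol : Folner W.
Hypothesis Hinc : forall n, W n `<=` W n.+1.

Lemma card_pos n : (0 < #|` W n|)%N.
Proof. by rewrite cardfs_gt0; apply/fset0Pn; exists 1. Qed.

Lemma W_mono a b : (a <= b)%N -> W a `<=` W b.
Proof.
elim: b => [|b IH]; first by rewrite leqn0 => /eqP ->; exact: fsubset_refl.
rewrite leq_eqVlt => /orP[/eqP -> |]; first exact: fsubset_refl.
by rewrite ltnS => /IH h; apply: fsubset_trans h (Hinc b).
Qed.

Lemma folner_N (K : nat) (v : G) : exists N, forall n, (N <= n)%N -> (K * dd (W n) v <= #|` W n|)%N.
Proof.
have HK1 : Rlt 0 (INR K.+1) by apply: lt_0_INR; apply/ltP.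
have [N HN] := HFol v^-1 (Rinv_0_lt_compat _ HK1).
exists N => n Nn.
have HM : Rlt 0 (INR #|` W n|) by apply: lt_0_INR; apply/ltP; apply: card_pos.
have := real_conv HM HK1 (HN n (leP Nn)).
rewrite -mult_INR => /INR_lt /ltP h.
apply: leq_trans (ltnW h); rewrite mulnC leq_mul2l; apply/orP; right; exact: leqnSn.
Qed.

Definition Kc (i : nat) : nat := (2 * i.+1 * (#|` W i| * #|` W i|))%N.

Lemma exN i : exists N, forall n, (N <= n)%N -> forall v, v \in W i -> (Kc i * dd (W n) v <= #|` W n|)%N.
Proof.
have := @finite_N (fun v n => (Kc i * dd (W n) v <= #|` W n|)%N) (enum_fset (W i)).
by apply => v _; exact: folner_N.
Qed.

Lemma HF_phi (N : nat -> nat)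
  (HN : forall i n, (N i <= n)%N -> forall v, v \in W i -> (Kc i * dd (W n) v <= #|` W n|)%N) :
  forall j m, (j < m)%N ->
  (2 * m * (#|` W (mkphi N j)| * \sum_(v <- W (mkphi N j)) dd (W (mkphi N m)) v) <= #|` W (mkphi N m)|)%N.
Proof.
move=> j [//|m'] jm.
set i := mkphi N m'.
have Nn : (N i <= mkphi N m'.+1)%N by rewrite /= leq_maxr.
set n := mkphi N m'.+1 in Nn *.
have sub : W (mkphi N j) `<=` W i by apply: W_mono; apply: mkphi_mono; rewrite -ltnS.
have hb : (#|` W (mkphi N j)| <= #|` W i|)%N by apply: fsubset_leq_card.
have hm : (m'.+1 <= i.+1)%N by rewrite ltnS mkphi_ge.
set S := \sum_(v <- W (mkphi N j)) dd (W n) v.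
set a := #|` W i|.
set b := #|` W (mkphi N j)|.
apply: (@leq_trans (2 * i.+1 * (a * S))).
  by apply: leq_mul; [apply: leq_mul | apply: leq_mul].
rewrite -(@leq_pmul2l a); last exact: card_pos.
have -> : (a * (2 * i.+1 * (a * S)) = Kc i * S)%N.
  rewrite /Kc -/a; nia.
rewrite /S big_distrr /=.
apply: leq_trans (@sum_const_le' _ _ #|` W n| _ _) _.
  by move=> v vj; apply: HN => //; apply/(fsubsetP sub).
by rewrite leq_mul2r hb orbT.
Qed.

End Constr.

Theorem lemma2p2 (G : groupType) (W : nat -> {fset G}) (C : R) :
  countable_group G ->
  amenable G ->
  (forall n, W n `<=` W n.+1) ->
  (forall n, 1 \in W n) ->
  Folner W ->
  Rlt (INR 0) C ->
  (forall n, indiv_filling C (W n)) ->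
  exists phi : nat -> nat, (forall i, (phi i < phi i.+1)%N) /\
    filling (fun i => W (phi i)).
Proof.
move=> _ _ Hinc H1 HFol HC Hind.
pose HNs := fun i => constructive_indefinite_description _ (exN H1 HFol i).
pose Nf := fun i => proj1_sig (HNs i).
have HN : forall i n, (Nf i <= n)%N -> forall v, v \in W i -> (Kc W i * dd (W n) v <= #|` W n|)%N.
  by move=> i; exact: (proj2_sig (HNs i)).
exists (mkphi Nf); split; first exact: mkphi_lt.
apply: filling_of HC _ _ _ => //.
exact: HF_phi.
Qed.
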